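(* Assume (A), (R), (S), let $c$ be a global solution of (E) with initial condition in $\ell^1_1$, and let $\mu>\max\{2-\alpha-\beta,1\}$. Set $\rho_\mu=\gamma/(\mu-1)$, $p=(\mu+\gamma-1)/(1+\gamma-\alpha-\beta)$, $q=p/(p-1)$. Then there exists $T>0$ such that for all $t\ge T$ $$\mathfrak m_\mu(t)\le 2\Bigl(\frac{2^{2+\rho_\mu}(2^\mu\mu)^pq^{1-p}}{p}\widehat A_*^{\,p}\widehat{\mathfrak s}_1^{\,1+p+\rho_\mu}+2^{2+\rho_\mu}\widehat{\mathfrak s}_\mu\widehat{\mathfrak s}_1^{\,\rho_\mu}\Bigr)^{\frac1{1+\rho_\mu}}$$ and $$\mathfrak m_\mu(t)\le 4\Bigl(\frac{(2^\mu\mu)^pq^{1-p}}{p}\widehat A_*^{\,p}\widehat{\mathfrak s}_1^{\,1+p}+\widehat{\mathfrak s}_\mu\Bigr).$$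
   Context: Throughout, $\mathbb N=\{1,2,\dots\}$. We consider the forced discrete coagulation equation $$\frac{d}{dt}c_k=\frac12\sum_{\ell=1}^{k-1}a_{k-\ell,\ell}c_{k-\ell}c_\ell-c_k\sum_{\ell=1}^{\infty}a_{k,\ell}c_\ell+s_k-r_kc_k,\qquad k\in\mathbb N,\tag{E}$$ with real coefficients satisfying the standing assumptions: (A) $a_{k,\ell}=a_{\ell,k}$ and $0\le a_{k,\ell}\le A_*(k^\alpha\ell^\beta+k^\beta\ell^\alpha)$ for all $k,\ell\in\mathbb N$, with constants $A_*>0$, $\alpha,\beta\in[0,1]$, $\alpha\le\beta$; (R) $r_k\ge R_*k^\gamma$ for all $k\in\mathbb N$, with $R_*>0$ and $\gamma>\max\{0,\alpha+\beta-1\}$; (S) $s_k\ge 0$ for all $k$, and for every $\mu\ge0$ there is $\mathfrak s_\mu>0$ with $\sum_{k\ge1}k^\mu s_k\le\mathfrak s_\mu$. Write $\widehat A_*=A_*/R_*$ and $\widehat{\mathfrak s}_\mu=\mathfrak s_\mu/R_*$. For $\mu\ge0$, $\ell^1_\mu$ is the set of sequences $(c_k)_{k\in\mathbb N}$ with $c_k\in[0,\infty)$ and $\sum_k k^\mu c_k<\infty$. Solution: a sequence $c=(c_k)_{k\in\mathbb N}$ of continuous functions $c_k:[0,T)\to[0,\infty)$ is a solution of (E) on $[0,T)$ with initial condition $c^{\mathrm{in}}\in\ell^1_1$ if (i) for each $k$, (E) holds for all $t\in(0,T)$; (ii) for each $\mu\ge1$, $c\in L^\infty([0,T),\ell^1_1)\cap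 C^1((0,T),\ell^1_\mu)$; (iii) $c_k(0)=c_k^{\mathrm{in}}$ for all $k$. It is a global solution if $T=\infty$. Moments: $\mathfrak m_\mu(t)=\sum_k k^\mu c_k(t)$. *)

(* Defs.v *)
From Stdlib Require Import Reals Lra.
Open Scope R_scope.

(* Convention: a sequence (x_k)_{k in N}, N = {1,2,...}, is represented by a
   function x : nat -> R whose value at index 0 is ignored; x k is x_k for k>=1.
   Time-dependent sequences are c : nat -> R -> R, c k t = c_k(t). *)

Fixpoint fsum (f : nat -> R) (n : nat) : R :=
  match n with
  | O => 0
  | S m => fsum f m + f m
  end.

Definition wnorm_is (mu : R) (x : nat -> R) (L : R) : Prop :=
  infinite_sum (fun n => Rpower (INR (S n)) mu * Rabs (x (S n))) L.

Definition moment_is (mu : R) (x : nat -> R) (L : R) : Prop :=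
  infinite_sum (fun n => Rpower (INR (S n)) mu * x (S n)) L.

Definition in_l1 (mu : R) (x : nat -> R) : Prop :=
  (forall k, (1 <= k)%nat -> 0 <= x k) /\ exists L, moment_is mu x L.

(* right-hand side of (E) at index k, time t, given the value L of the
   loss series sum_{l>=1} a_{k,l} c_l(t) *)
Definition rhsE (a : nat -> nat -> R) (s r : nat -> R) (c : nat -> R -> R)
  (k : nat) (t : R) (L : R) : R :=
  / 2 * fsum (fun i => a (k - S i)%nat (S i) * c (k - S i)%nat t * c (S i) t) (k - 1)
  - c k t * L + s k - r k * c k t.

(* the map t |-> c(t) is C^1 from (0,infinity) to the weighted space l^1_mu
   (with norm sum k^mu |x_k|) *)
Definition C1_pos (mu : R) (c : nat -> R -> R) : Prop :=
  exists dc : nat -> R -> R,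
    (forall t, 0 < t ->
       (exists L, wnorm_is mu (fun k => c k t) L) /\
       (exists L, wnorm_is mu (fun k => dc k t) L)) /\
    (forall t, 0 < t -> forall eps, 0 < eps -> exists delta, 0 < delta /\
       forall h, h <> 0 -> Rabs h < delta -> 0 < t + h ->
         exists L, wnorm_is mu (fun k => (c k (t + h) - c k t) / h - dc k t) L
                   /\ L < eps) /\
    (forall t, 0 < t -> forall eps, 0 < eps -> exists delta, 0 < delta /\
       forall t', 0 < t' -> Rabs (t' - t) < delta ->
         exists L, wnorm_is mu (fun k => dc k t' - dc k t) L /\ L < eps).

Definition global_solution (a : nat -> nat -> R) (s r : nat -> R)
  (c : nat -> R -> R) (cin : nat -> R) : Prop :=
  (forall k, (1 <= k)%nat -> forall t, 0 <= t -> 0 <= c k t) /\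
  (forall k, (1 <= k)%nat -> forall t, 0 <= t -> forall eps, 0 < eps ->
     exists delta, 0 < delta /\ forall t', 0 <= t' -> Rabs (t' - t) < delta ->
       Rabs (c k t' - c k t) < eps) /\
  (forall k, (1 <= k)%nat -> forall t, 0 < t ->
     exists L, infinite_sum (fun n => a k (S n) * c (S n) t) L /\
               derivable_pt_lim (c k) t (rhsE a s r c k t L)) /\
  (exists M, forall t, 0 <= t ->
     exists L, wnorm_is 1 (fun k => c k t) L /\ L <= M) /\
  (forall mu, 1 <= mu -> C1_pos mu c) /\
  (forall k, (1 <= k)%nat -> c k 0 = cin k).

(* Main.v *)
Require Import Defs.
From Stdlib Require Import Reals Lra Lia Classical ClassicalEpsilon.
From Coquelicot Require Coquelicot.
Open Scope R_scope.

Lemma fsum_ext (f g : nat -> R) n : (forall i, (i < n)%nat -> f i = g i) -> fsum f n = fsum g n.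
Proof. induction n; intros H; simpl; auto. rewrite IHn by (intros; apply H; lia). rewrite H by lia. auto. Qed.

Lemma fsum_le (f g : nat -> R) n : (forall i, (i < n)%nat -> f i <= g i) -> fsum f n <= fsum g n.
Proof. induction n; intros H; simpl; [lra|]. assert (H1 := H n ltac:(lia)). assert (fsum f n <= fsum g n) by (apply IHn; intros; apply H; lia). lra. Qed.

Lemma fsum_nonneg (f : nat -> R) n : (forall i, (i < n)%nat -> 0 <= f i) -> 0 <= fsum f n.
Proof. intros H. replace 0 with (fsum (fun _ => 0) n). apply fsum_le; auto. induction n; simpl; auto. rewrite IHn; [lra|]. intros; apply H; lia. Qed.

Lemma fsum_plus (f g : nat -> R) n : fsum (fun i => f i + g i) n = fsum f n + fsum g n.
Proof. induction n; simpl; [lra|]. rewrite IHn; lra. Qed.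

Lemma fsum_minus (f g : nat -> R) n : fsum (fun i => f i - g i) n = fsum f n - fsum g n.
Proof. induction n; simpl; [lra|]. rewrite IHn; lra. Qed.

Lemma fsum_scal (f : nat -> R) a n : fsum (fun i => a * f i) n = a * fsum f n.
Proof. induction n; simpl; [lra|]. rewrite IHn; lra. Qed.

Lemma fsum_zero n : fsum (fun _ => 0) n = 0.
Proof. induction n; simpl; auto. rewrite IHn; lra. Qed.

Lemma fsum_mono_n (f : nat -> R) n m : (n <= m)%nat -> (forall i, 0 <= f i) -> fsum f n <= fsum f m.
Proof. intros H Hf. induction H; [lra|]. simpl. specialize (Hf m). lra. Qed.

Lemma fsum_mult (f g : nat -> R) n m :
  fsum (fun i => fsum (fun j => f i * g j) m) n = fsum f n * fsum g m.
Proof. induction n; simpl; [lra|]. rewrite IHn, fsum_scal. lra. Qed.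

Lemma fsum_exchange (h : nat -> nat -> R) n m :
  fsum (fun i => fsum (fun j => h i j) m) n = fsum (fun j => fsum (fun i => h i j) n) m.
Proof. induction n; simpl. rewrite fsum_zero; auto. rewrite IHn, <- fsum_plus. auto. Qed.

Lemma fsum_shift (f : nat -> R) n : fsum f (S n) = f 0%nat + fsum (fun i => f (S i)) n.
Proof. induction n; simpl in *; [lra|]. rewrite IHn. lra. Qed.

Lemma fsum_reflect (f : nat -> R) n : fsum f n = fsum (fun i => f (n - S i)%nat) n.
Proof.
  revert f; induction n; intros f; [reflexivity|].
  rewrite (fsum_shift (fun i => f (S n - S i)%nat) n).
  change (fsum f (S n)) with (fsum f n + f n).
  rewrite (IHn f).
  replace (f (S n - 1)%nat) with (f n) by (f_equal; lia).
  rewrite (fsum_ext (fun i => f (n - S i)%nat) (fun i => f (S n - S (S i))%nat)); [lra|].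
  intros; f_equal; lia.
Qed.

Lemma sum_f_R0_fsum (u : nat -> R) n : sum_f_R0 u n = fsum u (S n).
Proof. induction n; simpl; [lra|]. rewrite IHn. simpl. lra. Qed.

Lemma partial_le_lim (u : nat -> R) L : infinite_sum u L -> (forall i, 0 <= u i) ->
  forall N, fsum u N <= L.
Proof.
  intros Hs Hu N.
  assert (G : forall n, sum_f_R0 u n <= L).
  { apply growing_ineq; [|exact Hs]. intros n; simpl. specialize (Hu (S n)); lra. }
  destruct N. simpl. specialize (G 0%nat); simpl in G. specialize (Hu 0%nat). lra.
  rewrite <- sum_f_R0_fsum. apply G.
Qed.

Lemma lim_le (u : nat -> R) L B : infinite_sum u L -> (forall N, fsum u N <= B) -> L <= B.
Proof.
  intros Hs HB. destruct (Rle_dec L B) as [|Hn]; auto. exfalso.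
  destruct (Hs (L - B)) as [N HN]; [lra|].
  specialize (HN N (le_n _)). unfold Rdist in HN.
  rewrite sum_f_R0_fsum in HN. specialize (HB (S N)).
  apply Rabs_def2 in HN. lra.
Qed.

Lemma deriv_fsum (F : nat -> R -> R) (dF : nat -> R) t n :
  (forall m, (m < n)%nat -> derivable_pt_lim (F m) t (dF m)) ->
  derivable_pt_lim (fun s => fsum (fun m => F m s) n) t (fsum dF n).
Proof.
  induction n; intros H; simpl.
  - apply derivable_pt_lim_const.
  - apply (derivable_pt_lim_plus (fun s => fsum (fun m => F m s) n) (F n)).
    apply IHn; intros; apply H; lia. apply H; lia.
Qed.


Lemma ln_le_sub1 x : 0 < x -> ln x <= x - 1.
Proof. intros Hx. pose proof (exp_ineq1_le (ln x)). rewrite exp_ln in H; lra. Qed.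

Lemma exp_le_exp' x y : x <= y -> exp x <= exp y.
Proof. intros [H|H]; [left; apply exp_increasing; auto| subst; lra]. Qed.

Lemma Rpower_pos x y : 0 < Rpower x y.
Proof. unfold Rpower; apply exp_pos. Qed.

Lemma amgm (u v th : R) : 0 < u -> 0 < v -> 0 <= th <= 1 ->
  Rpower u th * Rpower v (1 - th) <= th * u + (1 - th) * v.
Proof.
  intros Hu Hv Ht. set (A := th * u + (1 - th) * v).
  assert (HA : 0 < A).
  { unfold A. destruct (Req_dec th 0). subst; lra. assert (0 < th * u) by (apply Rmult_lt_0_compat; lra).
    assert (0 <= (1-th)*v) by (apply Rmult_le_pos; lra). lra. }
  unfold Rpower. rewrite <- exp_plus. rewrite <- (exp_ln A) by auto.
  apply exp_le_exp'.
  assert (H1 := ln_le_sub1 (u / A) ltac:(apply Rdiv_lt_0_compat; auto)).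
  assert (H2 := ln_le_sub1 (v / A) ltac:(apply Rdiv_lt_0_compat; auto)).
  unfold Rdiv in *. rewrite ln_mult, ln_Rinv in H1, H2 by (auto; apply Rinv_0_lt_compat; auto).
  assert (th * (ln u - ln A) + (1 - th) * (ln v - ln A) <= th * (u * / A - 1) + (1-th) * (v * / A - 1)).
  { apply Rplus_le_compat; apply Rmult_le_compat_l; lra. }
  assert (th * (u * / A - 1) + (1-th) * (v * / A - 1) = 0).
  { replace (th * (u * / A - 1) + (1-th) * (v * / A - 1)) with (A * / A - 1) by (unfold A; ring).
    rewrite Rinv_r; lra. }
  lra.
Qed.

Lemma tangent (a b r : R) : 0 < a -> 0 < b -> 1 <= r ->
  Rpower a r + r * Rpower a (r - 1) * (b - a) <= Rpower b r.
Proof.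
  intros Ha Hb Hr.
  assert (H := amgm (Rpower b r) (Rpower a r) (/ r) (Rpower_pos _ _) (Rpower_pos _ _)
                 ltac:(split; [left; apply Rinv_0_lt_compat; lra | rewrite <- Rinv_1; apply Rinv_le_contravar; lra])).
  rewrite !Rpower_mult in H.
  replace (r * / r) with 1 in H by (field; lra).
  rewrite Rpower_1 in H by auto.
  replace (r * (1 - / r)) with (r - 1) in H by (field; lra).
  assert (Ea : Rpower a r = a * Rpower a (r - 1)).
  { rewrite <- (Rpower_1 a) at 2 by auto. rewrite <- Rpower_plus. f_equal; ring. }
  rewrite Ea in *.
  apply Rmult_le_compat_l with (r := r) in H; [|lra].
  replace (r * (/ r * Rpower b r + (1 - / r) * (a * Rpower a (r - 1)))) with
    (Rpower b r + (r - 1) * (a * Rpower a (r-1))) in H by (field; lra).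
  nra.
Qed.

Lemma Rpower_le_base x y r : 0 <= r -> 0 < x <= y -> Rpower x r <= Rpower y r.
Proof. intros; apply Rle_Rpower_l; auto. Qed.

Lemma Rpower_mul x y r : 0 < x -> 0 < y -> Rpower (x * y) r = Rpower x r * Rpower y r.
Proof. intros; rewrite Rpower_mult_distr; auto. Qed.


Lemma Rpw_add x a b : Rpower x (a + b) = Rpower x a * Rpower x b.
Proof. apply Rpower_plus. Qed.

Lemma superadd x y mu : 0 < x -> 0 < y -> 1 <= mu ->
  Rpower x mu + Rpower y mu <= Rpower (x + y) mu.
Proof.
  intros Hx Hy Hm.
  assert (E : forall z, 0 < z -> Rpower z mu = z * Rpower z (mu - 1)).
  { intros z Hz. rewrite <- (Rpower_1 z) at 2 by auto. rewrite <- Rpw_add. f_equal; ring. }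
  rewrite (E x), (E y), (E (x+y)) by lra.
  assert (Rpower x (mu-1) <= Rpower (x+y) (mu-1)) by (apply Rpower_le_base; lra).
  assert (Rpower y (mu-1) <= Rpower (x+y) (mu-1)) by (apply Rpower_le_base; lra).
  nra.
Qed.

Lemma Ua x y mu : 0 < x -> 0 < y -> 1 <= mu ->
  Rpower (x + y) mu - Rpower y mu <= mu * Rpower (x + y) (mu - 1) * x.
Proof. intros Hx Hy Hm. pose proof (tangent (x+y) y mu ltac:(lra) Hy Hm). nra. Qed.

Lemma Rpower_inv2 r : Rpower (/ 2) r = / Rpower 2 r.
Proof. unfold Rpower. rewrite ln_Rinv by lra. rewrite <- exp_Ropp. f_equal; ring. Qed.

Lemma Uc x y r : 0 < x -> 0 < y -> 1 <= r ->
  Rpower (x + y) r <= Rpower 2 (r - 1) * (Rpower x r + Rpower y r).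
Proof.
  intros Hx Hy Hr. set (a := (x + y) / 2).
  assert (Ha : 0 < a) by (unfold a; lra).
  pose proof (tangent a x r Ha Hx Hr). pose proof (tangent a y r Ha Hy Hr).
  assert (Hs : 2 * Rpower a r <= Rpower x r + Rpower y r).
  { assert (a - x + (a - y) = 0) by (unfold a; lra). nra. }
  assert (Ea : Rpower a r = Rpower (x + y) r * / Rpower 2 r).
  { unfold a, Rdiv. rewrite Rpower_mul by lra. rewrite Rpower_inv2. auto. }
  assert (E2 : Rpower 2 r = Rpower 2 (r - 1) * 2).
  { rewrite <- (Rpower_1 2) at 3 by lra. rewrite <- Rpw_add. f_equal; ring. }
  rewrite Ea, E2 in Hs.
  assert (P : 0 < Rpower 2 (r-1)) by apply Rpower_pos.
  apply Rmult_le_compat_l with (r := Rpower 2 (r - 1)) in Hs; [|lra].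
  replace (Rpower 2 (r - 1) * (2 * (Rpower (x + y) r * / (Rpower 2 (r - 1) * 2))))
    with (Rpower (x + y) r) in Hs by (field; lra).
  auto.
Qed.

Lemma G1_le x y mu al be : 0 < x -> x <= y -> 1 <= mu -> 0 <= al -> 0 <= be ->
  (Rpower x al * Rpower y be + Rpower x be * Rpower y al) *
    (Rpower (x + y) mu - Rpower x mu - Rpower y mu)
  <= Rpower 2 (mu - 1) * mu * (x * Rpower y (mu - 1 + al + be) + y * Rpower x (mu - 1 + al + be)).
Proof.
  intros Hx Hxy Hm Ha Hb. assert (Hy : 0 < y) by lra.
  set (u := Rpower (x + y) mu - Rpower x mu - Rpower y mu).
  assert (Hu : 0 <= u) by (pose proof (superadd x y mu Hx Hy Hm); unfold u; lra).
  set (S0 := Rpower y (al + be)). set (s0 := Rpower x (al + be)).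
  assert (Hd : Rpower x al * Rpower y be + Rpower x be * Rpower y al <= S0 + s0).
  { unfold S0, s0. rewrite !Rpw_add.
    assert (Rpower x al <= Rpower y al) by (apply Rpower_le_base; lra).
    assert (Rpower x be <= Rpower y be) by (apply Rpower_le_base; lra).
    nra. }
  assert (Hss : s0 <= S0) by (apply Rpower_le_base; lra).
  assert (Hs0 : 0 < s0) by apply Rpower_pos.
  set (D := Rpower 2 (mu - 1) * mu).
  assert (HD : 0 < D) by (unfold D; pose proof (Rpower_pos 2 (mu-1)); nra).
  assert (U1 : u <= D * x * Rpower y (mu - 1)).
  { pose proof (Ua x y mu Hx Hy Hm).
    assert (Rpower (x+y) (mu-1) <= Rpower 2 (mu - 1) * Rpower y (mu - 1)).
    { rewrite <- Rpower_mul by lra. apply Rpower_le_base; lra. }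
    assert (0 < Rpower x mu) by apply Rpower_pos.
    assert (mu * x * Rpower (x+y) (mu-1) <= mu * x * (Rpower 2 (mu - 1) * Rpower y (mu - 1))).
    { apply Rmult_le_compat_l; [nra|auto]. }
    unfold D. unfold u. nra. }
  assert (K1 : S0 * (x * Rpower y (mu - 1)) = x * Rpower y (mu - 1 + al + be)).
  { unfold S0. replace (mu - 1 + al + be) with ((mu - 1) + (al + be)) by ring. rewrite (Rpw_add y (mu-1)). ring. }
  apply Rle_trans with ((S0 + s0) * u); [apply Rmult_le_compat_r; auto|].
  destruct (Rle_dec mu 2) as [Hm2|Hm2].
  -
    assert (K2 : s0 * (x * Rpower y (mu - 1)) <= y * Rpower x (mu - 1 + al + be)).
    { unfold s0.
      assert (Ex : Rpower x (al + be) * x = Rpower x (mu - 1 + al + be) * Rpower x (2 - mu)).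
      { rewrite <- (Rpower_1 x) at 2 by auto. rewrite <- !Rpw_add. f_equal; ring. }
      assert (Ey : Rpower y (mu - 1) = y * Rpower y (mu - 2)).
      { rewrite <- (Rpower_1 y) at 2 by auto. rewrite <- !Rpw_add. f_equal; ring. }
      assert (Hxy2 : Rpower x (2 - mu) <= Rpower y (2 - mu)) by (apply Rpower_le_base; lra).
      assert (E1 : Rpower y (2 - mu) * Rpower y (mu - 2) = 1).
      { rewrite <- Rpw_add. replace (2 - mu + (mu - 2)) with 0 by ring. apply Rpower_O; auto. }
      assert (P1 : 0 < Rpower y (mu - 2)) by apply Rpower_pos.
      assert (P2 : 0 < Rpower x (mu - 1 + al + be)) by apply Rpower_pos.
      replace (Rpower x (al + be) * (x * Rpower y (mu - 1))) with
        (Rpower x (al + be) * x * Rpower y (mu - 1)) by ring.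
      rewrite Ex, Ey.
      replace (Rpower x (mu - 1 + al + be) * Rpower x (2 - mu) * (y * Rpower y (mu - 2))) with
        (y * Rpower x (mu - 1 + al + be) * (Rpower x (2 - mu) * Rpower y (mu - 2))) by ring.
      rewrite <- (Rmult_1_r (y * Rpower x (mu - 1 + al + be))) at 2.
      apply Rmult_le_compat_l; [nra|]. rewrite <- E1. apply Rmult_le_compat_r; lra. }
    assert (P : 0 <= S0 + s0) by lra.
    apply Rle_trans with ((S0 + s0) * (D * x * Rpower y (mu - 1))); [apply Rmult_le_compat_l; auto|].
    replace ((S0 + s0) * (D * x * Rpower y (mu - 1))) with
      (D * (S0 * (x * Rpower y (mu - 1)) + s0 * (x * Rpower y (mu - 1)))) by ring.
    fold D. apply Rmult_le_compat_l; lra.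
  -
    assert (U2 : u <= D / 2 * x * (Rpower x (mu - 1) + Rpower y (mu - 1))).
    { pose proof (Ua x y mu Hx Hy Hm).
      pose proof (Uc x y (mu - 1) Hx Hy ltac:(lra)).
      assert (E2 : Rpower 2 (mu - 1) = Rpower 2 (mu - 1 - 1) * 2).
      { rewrite <- (Rpower_1 2) at 3 by lra. rewrite <- Rpw_add. f_equal; ring. }
      assert (0 < Rpower x mu) by apply Rpower_pos.
      unfold D. rewrite E2. unfold u.
      pose proof (Rpower_pos 2 (mu - 1 - 1)). pose proof (Rpower_pos x (mu - 1)).
      pose proof (Rpower_pos y (mu - 1)).
      assert (mu * x * Rpower (x+y) (mu-1) <= mu * x * (Rpower 2 (mu - 1 - 1) * (Rpower x (mu - 1) + Rpower y (mu - 1)))).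
      { apply Rmult_le_compat_l; [nra|auto]. }
      nra. }
    assert (K3 : s0 * (x * Rpower x (mu - 1)) <= y * Rpower x (mu - 1 + al + be)).
    { unfold s0.
      replace (Rpower x (al + be) * (x * Rpower x (mu - 1))) with (x * Rpower x (mu - 1 + al + be)).
      2:{ replace (mu - 1 + al + be) with ((mu - 1) + (al + be)) by ring. rewrite Rpw_add. ring. }
      apply Rmult_le_compat_r; [left; apply Rpower_pos | lra]. }
    replace ((S0 + s0) * u) with ((S0 - s0) * u + 2 * s0 * u) by ring.
    apply Rle_trans with ((S0 - s0) * (D * x * Rpower y (mu - 1)) +
                          2 * s0 * (D / 2 * x * (Rpower x (mu - 1) + Rpower y (mu - 1)))).
    { apply Rplus_le_compat; apply Rmult_le_compat_l; lra. }
    replace ((S0 - s0) * (D * x * Rpower y (mu - 1)) +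
             2 * s0 * (D / 2 * x * (Rpower x (mu - 1) + Rpower y (mu - 1)))) with
      (D * (S0 * (x * Rpower y (mu - 1)) + s0 * (x * Rpower x (mu - 1)))) by field.
    fold D. apply Rmult_le_compat_l; lra.
Qed.

Lemma G1 x y mu al be : 0 < x -> 0 < y -> 1 <= mu -> 0 <= al -> 0 <= be ->
  (Rpower x al * Rpower y be + Rpower x be * Rpower y al) *
    (Rpower (x + y) mu - Rpower x mu - Rpower y mu)
  <= Rpower 2 (mu - 1) * mu * (x * Rpower y (mu - 1 + al + be) + y * Rpower x (mu - 1 + al + be)).
Proof.
  intros Hx Hy Hm Ha Hb. destruct (Rle_dec x y).
  - apply G1_le; auto.
  - pose proof (G1_le y x mu al be Hy ltac:(lra) Hm Ha Hb).
    replace (x + y) with (y + x) by ring.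
    replace (Rpower x al * Rpower y be + Rpower x be * Rpower y al) with
      (Rpower y al * Rpower x be + Rpower y be * Rpower x al) by ring.
    replace (x * Rpower y (mu - 1 + al + be) + y * Rpower x (mu - 1 + al + be)) with
      (y * Rpower x (mu - 1 + al + be) + x * Rpower y (mu - 1 + al + be)) by ring.
    replace (Rpower (y + x) mu - Rpower x mu - Rpower y mu) with
      (Rpower (y + x) mu - Rpower y mu - Rpower x mu) by ring. auto.
Qed.


Lemma young_pt y z E p : 0 < y -> 0 < z -> 1 < p ->
  Rpower y (E * (1 - / p)) <= z * (1 - / p) * Rpower y E + Rpower z (1 - p) / p.
Proof.
  intros Hy Hz Hp.
  assert (Hip : 0 < / p < 1).
  { split. apply Rinv_0_lt_compat; lra. rewrite <- Rinv_1. apply Rinv_lt_contravar; lra. }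
  pose proof (amgm (z * Rpower y E) (Rpower z (1 - p)) (1 - / p)
    ltac:(apply Rmult_lt_0_compat; auto; apply Rpower_pos) ltac:(apply Rpower_pos) ltac:(lra)) as H.
  rewrite Rpower_mul in H by (auto; apply Rpower_pos).
  rewrite !Rpower_mult in H.
  replace (1 - (1 - / p)) with (/ p) in H by ring.
  replace (Rpower z (1 - / p) * Rpower y (E * (1 - / p)) * Rpower z ((1 - p) * / p)) with
    (Rpower y (E * (1 - / p)) * (Rpower z (1 - / p) * Rpower z ((1 - p) * / p))) in H by ring.
  rewrite <- Rpw_add in H. replace (1 - / p + (1 - p) * / p) with 0 in H by (field; lra).
  rewrite Rpower_O in H by auto. unfold Rdiv. lra.
Qed.

Lemma interp_pt k lam th P : 0 < k -> 0 < lam -> 0 <= th < 1 ->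
  Rpower k (th + (1 - th) * P) <=
  th * lam * k + (1 - th) * Rpower lam (- (th / (1 - th))) * Rpower k P.
Proof.
  intros Hk Hl Ht.
  pose proof (amgm (lam * k) (Rpower lam (- (th / (1 - th))) * Rpower k P) th
    ltac:(nra) ltac:(apply Rmult_lt_0_compat; apply Rpower_pos) ltac:(lra)) as H.
  rewrite !Rpower_mul in H by (auto; try apply Rpower_pos; nra).
  rewrite !Rpower_mult in H.
  replace (Rpower lam th * Rpower k th * (Rpower lam (- (th / (1 - th)) * (1 - th)) * Rpower k (P * (1 - th))))
    with ((Rpower lam th * Rpower lam (- (th / (1 - th)) * (1 - th))) * (Rpower k th * Rpower k (P * (1 - th)))) in H by ring.
  rewrite <- !Rpw_add in H.
  replace (th + - (th / (1 - th)) * (1 - th)) with 0 in H by (field; lra).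
  rewrite Rpower_O in H by auto.
  replace (th + P * (1 - th)) with (th + (1 - th) * P) in H by ring. lra.
Qed.


Lemma cont_eps f x : continuity_pt f x -> forall eps, 0 < eps ->
  exists alp, 0 < alp /\ forall y, Rabs (y - x) < alp -> Rabs (f y - f x) < eps.
Proof.
  intros H eps He. destruct (H eps He) as [alp [Ha Hy]]. exists alp; split; auto.
  intros y Hyx. destruct (Req_dec y x). subst. rewrite Rminus_diag, Rabs_R0; auto.
  apply (Hy y). split. split; [exact I| auto]. exact Hyx.
Qed.

Lemma dlim_cont f x d : derivable_pt_lim f x d -> continuity_pt f x.
Proof. intros H. apply derivable_continuous_pt. exists d; auto. Qed.

Lemma barrier (f df : R -> R) t0 X dl B :
  0 < dl -> 0 <= X -> 0 <= B ->
  (forall t, t0 <= t -> derivable_pt_lim f t (df t)) ->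
  (forall t, t0 <= t -> X <= f t -> df t <= - dl) ->
  f t0 <= B ->
  forall t, t0 + B / dl <= t -> f t <= X.
Proof.
  intros Hdl HX HB Hd Hneg Hf0 t1 Ht1.
  assert (HBd : 0 <= B / dl) by (apply Rmult_le_pos; auto; left; apply Rinv_0_lt_compat; auto).
  assert (Dec : forall a b, t0 <= a -> a <= b -> (forall s, a <= s <= b -> X < f s) ->
            f b <= f a - dl * (b - a)).
  { intros a b Ha Hab Hs. destruct (Req_dec a b). subst; lra.
    destruct (Coquelicot.Derive.MVT_gen f a b df) as [c [Hc Heq]].
    - intros x Hx. rewrite Rmin_left, Rmax_right in Hx by lra. apply Coquelicot.Derive.is_derive_Reals. apply Hd; lra.
    - intros x Hx. rewrite Rmin_left, Rmax_right in Hx by lra. apply (dlim_cont _ _ (df x)). apply Hd; lra.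
    - rewrite Rmin_left, Rmax_right in Hc by lra.
      assert (df c <= - dl) by (apply Hneg; [lra| left; apply Hs; lra]).
      assert (df c * (b - a) <= - dl * (b - a)) by (apply Rmult_le_compat_r; lra). lra. }
  destruct (Rle_dec (f t1) X) as [|Hc]; auto. exfalso.
  set (E := fun s => t0 <= s <= t1 /\ f s <= X).
  destruct (classic (exists s, E s)) as [Hex|Hne].
  - destruct (completeness E) as [ss [Hub Hlub]].
    { exists t1. intros s Hs. apply Hs. } { auto. }
    destruct Hex as [s0 Hs0].
    assert (Hss0 : t0 <= ss) by (pose proof (Hub s0 Hs0); unfold E in Hs0; lra).
    assert (Hss1 : ss <= t1) by (apply Hlub; intros s Hs; apply Hs).
    assert (Hgt : forall s, ss < s <= t1 -> X < f s).
    { intros s Hs. destruct (Rlt_dec X (f s)); auto. exfalso.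
      assert (E s) by (split; lra). pose proof (Hub s H). lra. }
    assert (Hcs : continuity_pt f ss) by (apply (dlim_cont _ _ (df ss)); apply Hd; lra).
    assert (Hfss : f ss <= X).
    { destruct (Rle_dec (f ss) X) as [|Hn]; auto. exfalso.
      destruct (cont_eps f ss Hcs (f ss - X)) as [alp [Ha Hy]]; [lra|].
      assert (Hnub : ~ is_upper_bound E (ss - alp / 2)).
      { intros Hu. pose proof (Hlub _ Hu). lra. }
      apply not_all_ex_not in Hnub. destruct Hnub as [s Hs].
      apply imply_to_and in Hs. destruct Hs as [HEs Hs].
      pose proof (Hub s HEs). destruct HEs as [_ HEs].
      assert (Rabs (s - ss) < alp) by (apply Rabs_def1; lra).
      specialize (Hy s H0). apply Rabs_def2 in Hy. lra. }
    assert (Hlt : ss < t1) by (destruct (Req_dec ss t1); [subst; lra| lra]).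
    destruct (cont_eps f ss Hcs (dl * (t1 - ss) / 2)) as [alp [Ha Hy]].
    { apply Rmult_lt_0_compat; [nra|lra]. }
    set (s2 := ss + Rmin alp (t1 - ss) / 2).
    assert (Hm1 : 0 < Rmin alp (t1 - ss)) by (apply Rmin_pos; lra).
    assert (Hm2 : Rmin alp (t1 - ss) <= alp) by apply Rmin_l.
    assert (Hm3 : Rmin alp (t1 - ss) <= t1 - ss) by apply Rmin_r.
    assert (Hs2 : Rabs (s2 - ss) < alp) by (unfold s2; apply Rabs_def1; lra).
    specialize (Hy s2 Hs2). apply Rabs_def2 in Hy.
    assert (HD := Dec s2 t1 ltac:(unfold s2; lra) ltac:(unfold s2; lra)
                  ltac:(intros s Hs; apply Hgt; unfold s2 in Hs; lra)).
    assert (dl * (t1 - s2) >= dl * (t1 - ss) / 2) by (unfold s2; nra).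
    lra.
  - assert (HD := Dec t0 t1 ltac:(lra) ltac:(lra) ltac:(intros s Hs; destruct (Rlt_dec X (f s)); auto;
                   exfalso; apply Hne; exists s; split; lra)).
    assert (dl * (t1 - t0) >= B) by (
      assert (dl * (B / dl) = B) by (field; lra);
      assert (dl * (t1 - t0) >= dl * (B / dl)) by (apply Rle_ge, Rmult_le_compat_l; lra); lra).
    lra.
Qed.


Definition Sq (h : nat -> nat -> R) N := fsum (fun i => fsum (fun j => h (S i) (S j)) N) N.
Definition Tri (h : nat -> nat -> R) N := fsum (fun i => fsum (fun j => h (S i) (S j)) (N - S i)) N.
Definition Diag (h : nat -> nat -> R) N :=
  fsum (fun m => fsum (fun i => h (S m - S i)%nat (S i)) m) N.

Lemma diag_tri h N : Diag h N = Tri h N.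
Proof.
  induction N. reflexivity.
  unfold Diag, Tri in *. change (fsum ?f (S N)) with (fsum f N + f N).
  rewrite IHN. replace (S N - S N)%nat with 0%nat by lia. simpl fsum at 4.
  rewrite (fsum_ext (fun i => fsum (fun j => h (S i) (S j)) (S N - S i))
              (fun i => fsum (fun j => h (S i) (S j)) (N - S i) + h (S i) (S (N - S i)))).
  2:{ intros i Hi. replace (S N - S i)%nat with (S (N - S i)) by lia. reflexivity. }
  rewrite fsum_plus.
  rewrite (fsum_reflect (fun i => h (S i) (S (N - S i)))).
  rewrite (fsum_ext (fun i => h (S (N - S i)) (S (N - S (N - S i))))
                    (fun i => h (S N - S i)%nat (S i))).
  change (fsum (fun j : nat => h (S N) (S j)) 0) with 0. lra. intros i Hi. f_equal; lia.
Qed.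

Lemma tri_le_sq h N : (forall i j, (1 <= i)%nat -> (1 <= j)%nat -> 0 <= h i j) -> Tri h N <= Sq h N.
Proof.
  intros H. unfold Tri, Sq. apply fsum_le. intros i Hi. apply fsum_mono_n. lia.
  intros j; apply H; lia.
Qed.

Lemma sq_sym h N : Sq h N = Sq (fun i j => h j i) N.
Proof. unfold Sq. apply fsum_exchange. Qed.

Lemma sq_plus h g N : Sq (fun i j => h i j + g i j) N = Sq h N + Sq g N.
Proof. unfold Sq. rewrite <- fsum_plus. apply fsum_ext. intros. apply fsum_plus. Qed.

Lemma sq_scal h x N : Sq (fun i j => x * h i j) N = x * Sq h N.
Proof. unfold Sq. rewrite <- fsum_scal. apply fsum_ext. intros. apply fsum_scal. Qed.

Lemma sq_le h g N : (forall i j, (1 <= i)%nat -> (1 <= j)%nat -> h i j <= g i j) -> Sq h N <= Sq g N.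
Proof. intros H. unfold Sq. apply fsum_le; intros. apply fsum_le; intros. apply H; lia. Qed.

Lemma sq_mult f g N : Sq (fun i j => f i * g j) N = fsum (fun i => f (S i)) N * fsum (fun j => g (S j)) N.
Proof. unfold Sq. apply fsum_mult. Qed.

Definition w nu (k : nat) := Rpower (INR k) nu.

Definition mom (c : nat -> R -> R) nu N t := fsum (fun m => w nu (S m) * c (S m) t) N.

Lemma INR_S_pos m : 0 < INR (S m).
Proof. apply lt_0_INR; lia. Qed.

Lemma w_pos nu k : 0 < w nu k.
Proof. apply Rpower_pos. Qed.

Lemma rhs_bound (a : nat -> nat -> R) (s r : nat -> R) (c : nat -> R -> R) (t nu : R)
   (Lf : nat -> R) N :
  (forall k l, (1 <= k)%nat -> (1 <= l)%nat -> a k l = a l k) ->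
  (forall k l, (1 <= k)%nat -> (1 <= l)%nat -> 0 <= a k l) ->
  (forall k, (1 <= k)%nat -> 0 <= c k t) ->
  (forall k, (1 <= k)%nat -> forall M, fsum (fun n => a k (S n) * c (S n) t) M <= Lf k) ->
  fsum (fun m => w nu (S m) * rhsE a s r c (S m) t (Lf (S m))) N <=
  / 2 * Sq (fun i j => (w nu (i + j) - w nu i - w nu j) * a i j * c i t * c j t) N
  + fsum (fun m => w nu (S m) * s (S m)) N - fsum (fun m => w nu (S m) * r (S m) * c (S m) t) N.
Proof.
  intros Hsym Ha0 Hc0 HL.
  set (h := fun i j => w nu (i + j) * (a i j * c i t * c j t)).
  set (g := fun i j => w nu i * (a i j * c i t * c j t)).
  assert (E1 : fsum (fun m => w nu (S m) * rhsE a s r c (S m) t (Lf (S m))) N =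
     / 2 * Diag h N - fsum (fun m => w nu (S m) * c (S m) t * Lf (S m)) N
     + fsum (fun m => w nu (S m) * s (S m)) N - fsum (fun m => w nu (S m) * r (S m) * c (S m) t) N).
  { unfold Diag. rewrite <- fsum_scal, <- fsum_minus, <- fsum_plus, <- fsum_minus.
    apply fsum_ext. intros m Hm. unfold rhsE.
    replace (S m - 1)%nat with m by lia.
    rewrite (fsum_ext (fun i => h (S m - S i)%nat (S i))
                      (fun i => w nu (S m) * (a (S m - S i)%nat (S i) * c (S m - S i)%nat t * c (S i) t))).
    2:{ intros i Hi. unfold h. replace (S m - S i + S i)%nat with (S m) by lia. reflexivity. }
    rewrite fsum_scal. ring. }
  rewrite E1. clear E1. rewrite diag_tri.
  assert (E2 : Sq g N <= fsum (fun m => w nu (S m) * c (S m) t * Lf (S m)) N).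
  { unfold Sq. apply fsum_le. intros m Hm.
    unfold g. rewrite (fsum_ext _ (fun j => (w nu (S m) * c (S m) t) * (a (S m) (S j) * c (S j) t))).
    2:{ intros; ring. }
    rewrite fsum_scal. apply Rmult_le_compat_l.
    apply Rmult_le_pos; [left; apply w_pos | apply Hc0; lia].
    apply HL; lia. }
  assert (E3 : Sq g N = Sq (fun i j => g j i) N) by apply sq_sym.
  assert (E4 : Tri h N <= Sq h N).
  { apply tri_le_sq. intros i j Hi Hj. unfold h. apply Rmult_le_pos. left; apply w_pos.
    repeat apply Rmult_le_pos; auto. }
  assert (E5 : Sq (fun i j => (w nu (i + j) - w nu i - w nu j) * a i j * c i t * c j t) N
               = Sq h N - Sq g N - Sq (fun i j => g j i) N).
  { replace (Sq h N - Sq g N - Sq (fun i j => g j i) N) with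
      (Sq h N + (-1) * Sq g N + (-1) * Sq (fun i j => g j i) N) by ring.
    rewrite <- (sq_scal g (-1)), <- (sq_scal (fun i j => g j i) (-1)).
    rewrite <- !sq_plus. unfold Sq. apply fsum_ext; intros i Hi; apply fsum_ext; intros j Hj.
    unfold h, g. rewrite (Hsym (S j) (S i)) by lia. ring. }
  rewrite E5. lra.
Qed.

Lemma deriv_mom (c : nat -> R -> R) (dc : nat -> R) nu N t :
  (forall k, (1 <= k)%nat -> derivable_pt_lim (c k) t (dc k)) ->
  derivable_pt_lim (mom c nu N) t (fsum (fun m => w nu (S m) * dc (S m)) N).
Proof.
  intros H. unfold mom.
  apply (deriv_fsum (fun m s => w nu (S m) * c (S m) s) (fun m => w nu (S m) * dc (S m))).
  intros m Hm. apply derivable_pt_lim_scal. apply H. lia.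
Qed.


Lemma pair_bound x y mu gam al be As aij ci cj z p :
  0 < x -> 0 < y -> 1 <= mu -> 0 <= al -> 0 <= be -> 0 < As ->
  0 <= aij -> aij <= As * (Rpower x al * Rpower y be + Rpower x be * Rpower y al) ->
  0 <= ci -> 0 <= cj -> 0 < z -> 1 < p ->
  mu - 2 + al + be = (mu + gam - 1) * (1 - / p) ->
  (Rpower (x + y) mu - Rpower x mu - Rpower y mu) * aij * ci * cj <=
  As * (Rpower 2 (mu - 1) * mu) * (z * (1 - / p)) *
     ((x * ci) * (Rpower y (mu + gam) * cj) + (Rpower x (mu + gam) * ci) * (y * cj))
  + As * (Rpower 2 (mu - 1) * mu) * (Rpower z (1 - p) / p) * 2 * ((x * ci) * (y * cj)).
Proof.
  intros Hx Hy Hm Ha Hb HA Ha0 Hab Hci Hcj Hz Hp He.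
  set (u := Rpower (x + y) mu - Rpower x mu - Rpower y mu).
  assert (Hu : 0 <= u) by (pose proof (superadd x y mu Hx Hy Hm); unfold u; lra).
  set (D := Rpower 2 (mu - 1) * mu).
  assert (HD : 0 < D) by (unfold D; pose proof (Rpower_pos 2 (mu-1)); nra).
  pose proof (G1 x y mu al be Hx Hy Hm Ha Hb) as HG. fold u D in HG.
  assert (Y : forall v, 0 < v -> Rpower v (mu - 1 + al + be) <=
             z * (1 - / p) * Rpower v (mu + gam) + Rpower z (1 - p) / p * v).
  { intros v Hv. pose proof (young_pt v z (mu + gam - 1) p Hv Hz Hp) as HY.
    rewrite <- He in HY.
    assert (E1 : Rpower v (mu - 1 + al + be) = v * Rpower v (mu - 2 + al + be)).
    { rewrite <- (Rpower_1 v) at 2 by auto. rewrite <- Rpw_add. f_equal; ring. }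
    assert (E2 : Rpower v (mu + gam) = v * Rpower v (mu + gam - 1)).
    { rewrite <- (Rpower_1 v) at 2 by auto. rewrite <- Rpw_add. f_equal; ring. }
    rewrite E1, E2. apply Rmult_le_compat_l with (r := v) in HY; [|lra]. nra. }
  assert (H1 : u * aij <= As * D * (x * Rpower y (mu - 1 + al + be) + y * Rpower x (mu - 1 + al + be))).
  { apply Rle_trans with (u * (As * (Rpower x al * Rpower y be + Rpower x be * Rpower y al))).
    apply Rmult_le_compat_l; auto. nra. }
  assert (H2 : x * Rpower y (mu - 1 + al + be) + y * Rpower x (mu - 1 + al + be) <=
      z * (1 - / p) * (x * Rpower y (mu + gam) + y * Rpower x (mu + gam)) + Rpower z (1 - p) / p * 2 * (x * y)).
  { pose proof (Y y Hy). pose proof (Y x Hx).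
    apply Rmult_le_compat_l with (r := x) in H; [|lra].
    apply Rmult_le_compat_l with (r := y) in H0; [|lra]. nra. }
  assert (H3 : u * aij <= As * D * (z * (1 - / p) * (x * Rpower y (mu + gam) + y * Rpower x (mu + gam)) + Rpower z (1 - p) / p * 2 * (x * y))).
  { apply Rle_trans with (1 := H1). apply Rmult_le_compat_l; [nra|auto]. }
  assert (Hcc : 0 <= ci * cj) by nra.
  apply Rmult_le_compat_r with (r := ci * cj) in H3; auto.
  replace (u * aij * ci * cj) with (u * aij * (ci * cj)) by ring.
  eapply Rle_trans; [exact H3|]. right; ring.
Qed.


Lemma w1 k : (1 <= k)%nat -> w 1 k = INR k.
Proof. intros; unfold w; apply Rpower_1. apply lt_0_INR; lia. Qed.

Lemma sq_three (f g : nat -> R) K1 K2 N :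
  Sq (fun i j => K1 * (f i * g j + g i * f j) + K2 * (f i * f j)) N =
  K1 * (2 * (fsum (fun m => f (S m)) N * fsum (fun m => g (S m)) N)) + K2 * (fsum (fun m => f (S m)) N)^2.
Proof.
  rewrite (sq_plus (fun i j => K1 * (f i * g j + g i * f j)) (fun i j => K2 * (f i * f j))).
  rewrite (sq_scal (fun i j => f i * g j + g i * f j)), sq_scal.
  rewrite (sq_plus (fun i j => f i * g j) (fun i j => g i * f j)).
  rewrite !sq_mult. ring.
Qed.

Lemma Qmu_bound (a : nat -> nat -> R) (c : nat -> R -> R) t mu gam al be As z p N :
  1 <= mu -> 0 <= al -> 0 <= be -> 0 < As -> 0 < z -> 1 < p ->
  mu - 2 + al + be = (mu + gam - 1) * (1 - / p) ->
  (forall k l, (1 <= k)%nat -> (1 <= l)%nat -> 0 <= a k l) ->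
  (forall k l, (1 <= k)%nat -> (1 <= l)%nat ->
     a k l <= As * (Rpower (INR k) al * Rpower (INR l) be + Rpower (INR k) be * Rpower (INR l) al)) ->
  (forall k, (1 <= k)%nat -> 0 <= c k t) ->
  / 2 * Sq (fun i j => (w mu (i + j) - w mu i - w mu j) * a i j * c i t * c j t) N <=
  As * (Rpower 2 (mu - 1) * mu) * (z * (1 - / p)) * (mom c 1 N t * mom c (mu + gam) N t)
  + As * (Rpower 2 (mu - 1) * mu) * (Rpower z (1 - p) / p) * (mom c 1 N t)^2.
Proof.
  intros Hm Ha Hb HA Hz Hp He Ha0 Haub Hc.
  set (K1 := As * (Rpower 2 (mu - 1) * mu) * (z * (1 - / p))).
  set (K2 := As * (Rpower 2 (mu - 1) * mu) * (Rpower z (1 - p) / p) * 2).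
  assert (HS : Sq (fun i j => (w mu (i + j) - w mu i - w mu j) * a i j * c i t * c j t) N <=
     Sq (fun i j => K1 * ((w 1 i * c i t) * (w (mu + gam) j * c j t) + (w (mu + gam) i * c i t) * (w 1 j * c j t))
                    + K2 * ((w 1 i * c i t) * (w 1 j * c j t))) N).
  { apply sq_le. intros i j Hi Hj. unfold K1, K2. rewrite !w1 by auto. unfold w. rewrite plus_INR.
    apply (pair_bound _ _ mu gam al be As); auto; try (apply lt_0_INR; lia). }
  rewrite (sq_three (fun i => w 1 i * c i t) (fun i => w (mu + gam) i * c i t)) in HS.
  unfold mom. unfold K2 in HS. lra.
Qed.

Lemma Q1_zero (a : nat -> nat -> R) (c : nat -> R -> R) t N :
  Sq (fun i j => (w 1 (i + j) - w 1 i - w 1 j) * a i j * c i t * c j t) N = 0.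
Proof.
  unfold Sq. rewrite <- (fsum_zero N). apply fsum_ext. intros i Hi.
  rewrite <- (fsum_zero N). apply fsum_ext. intros j Hj.
  rewrite !w1 by lia. rewrite plus_INR. ring.
Qed.

Lemma s_part (s : nat -> R) nu L N : (forall k, (1 <= k)%nat -> 0 <= s k) ->
  moment_is nu s L -> fsum (fun m => w nu (S m) * s (S m)) N <= L.
Proof.
  intros Hs HL. apply partial_le_lim; auto. intros i.
  apply Rmult_le_pos; [left; apply Rpower_pos| apply Hs; lia].
Qed.

Lemma r_part (r : nat -> R) (c : nat -> R -> R) t nu gam Rs N :
  (forall k, (1 <= k)%nat -> Rs * Rpower (INR k) gam <= r k) ->
  (forall k, (1 <= k)%nat -> 0 <= c k t) ->
  Rs * mom c (nu + gam) N t <= fsum (fun m => w nu (S m) * r (S m) * c (S m) t) N.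
Proof.
  intros Hr Hc. unfold mom. rewrite <- fsum_scal. apply fsum_le. intros m Hm.
  unfold w. rewrite Rpw_add.
  assert (H1 := Hr (S m) ltac:(lia)). assert (H2 := Hc (S m) ltac:(lia)).
  assert (H3 := Rpower_pos (INR (S m)) nu).
  assert (Rs * Rpower (INR (S m)) gam * (Rpower (INR (S m)) nu * c (S m) t) <= r (S m) * (Rpower (INR (S m)) nu * c (S m) t)).
  { apply Rmult_le_compat_r; auto. nra. }
  nra.
Qed.

Lemma mom_mono (c : nat -> R -> R) t nu1 nu2 N : nu1 <= nu2 ->
  (forall k, (1 <= k)%nat -> 0 <= c k t) -> mom c nu1 N t <= mom c nu2 N t.
Proof.
  intros Hn Hc. unfold mom. apply fsum_le. intros m Hm. apply Rmult_le_compat_r. apply Hc; lia.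
  unfold w. apply Rle_Rpower; auto. apply (le_INR 1). lia.
Qed.

Lemma mom_nonneg (c : nat -> R -> R) t nu N :
  (forall k, (1 <= k)%nat -> 0 <= c k t) -> 0 <= mom c nu N t.
Proof.
  intros Hc. unfold mom. apply fsum_nonneg. intros m Hm. apply Rmult_le_pos. left; apply w_pos. apply Hc; lia.
Qed.


Lemma mom_df (a : nat -> nat -> R) (s r : nat -> R) (c : nat -> R -> R) nu N :
  (forall k, (1 <= k)%nat -> forall t, 0 < t -> exists L,
      infinite_sum (fun n => a k (S n) * c (S n) t) L /\ derivable_pt_lim (c k) t (rhsE a s r c k t L)) ->
  (forall k l, (1 <= k)%nat -> (1 <= l)%nat -> a k l = a l k) ->
  (forall k l, (1 <= k)%nat -> (1 <= l)%nat -> 0 <= a k l) ->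
  (forall k, (1 <= k)%nat -> forall t, 0 <= t -> 0 <= c k t) ->
  exists df : R -> R, forall t, 0 < t -> derivable_pt_lim (mom c nu N) t (df t) /\
    df t <= / 2 * Sq (fun i j => (w nu (i + j) - w nu i - w nu j) * a i j * c i t * c j t) N
      + fsum (fun m => w nu (S m) * s (S m)) N - fsum (fun m => w nu (S m) * r (S m) * c (S m) t) N.
Proof.
  intros Hsol Hsym Ha0 Hc0.
  assert (HL : forall t k, exists L, 0 < t -> (1 <= k)%nat ->
     infinite_sum (fun n => a k (S n) * c (S n) t) L /\ derivable_pt_lim (c k) t (rhsE a s r c k t L)).
  { intros t k. destruct (classic (0 < t /\ (1 <= k)%nat)) as [[H1 H2]|Hn].
    - destruct (Hsol k H2 t H1) as [L HL]. exists L; auto.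
    - exists 0. intros H1 H2. exfalso; auto. }
  set (Lf := fun t k => proj1_sig (constructive_indefinite_description _ (HL t k))).
  assert (HLf : forall t k, 0 < t -> (1 <= k)%nat ->
     infinite_sum (fun n => a k (S n) * c (S n) t) (Lf t k) /\ derivable_pt_lim (c k) t (rhsE a s r c k t (Lf t k))).
  { intros t k. unfold Lf. destruct (constructive_indefinite_description _ (HL t k)). simpl. auto. }
  exists (fun t => fsum (fun m => w nu (S m) * rhsE a s r c (S m) t (Lf t (S m))) N).
  intros t Ht. split.
  - apply (deriv_mom c (fun k => rhsE a s r c k t (Lf t k))). intros k Hk. apply HLf; auto.
  - apply rhs_bound; auto.
    + intros k Hk. apply Hc0; [auto|lra].
    + intros k Hk M. apply partial_le_lim. apply HLf; auto.
      intros n. apply Rmult_le_pos; [apply Ha0; lia| apply Hc0; [lia|lra]].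
Qed.


Ltac pos := repeat (match goal with
  | |- 0 < Rpower _ _ => apply Rpower_pos
  | |- 0 < _ * _ => apply Rmult_lt_0_compat
  | |- 0 < / _ => apply Rinv_0_lt_compat
  | |- 0 < _ / _ => apply Rdiv_lt_0_compat
  end); try lra.

Ltac lnexp := repeat first [ rewrite ln_mult by pos | rewrite ln_Rinv by pos | rewrite ln_Rpower
   | unfold Rdiv ].

Lemma Kconst As Rs s1 mu p q :
  0 < As -> 0 < Rs -> 0 < s1 -> 0 < mu -> 1 < p -> 0 < q ->
  let D := Rpower 2 (mu - 1) * mu in
  let sig' := Rpower 2 (1 / (1 + p)) * (s1 / Rs) in
  let z := q * Rs / (2 * As * D * sig') in
  As * D * (Rpower z (1 - p) / p) * (sig' * sig') =
  Rs * (Rpower (Rpower 2 mu * mu) p * Rpower q (1 - p) / p * Rpower (As / Rs) p * Rpower (s1 / Rs) (1 + p)).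
Proof.
  intros HA HR Hs Hm Hp Hq D sig' z.
  assert (HD : 0 < D) by (unfold D; pos).
  assert (Hsg : 0 < sig') by (unfold sig'; pos).
  assert (Hz : 0 < z) by (unfold z; pos).
  apply ln_inv; [pos | pos|].
  unfold z, sig', D. lnexp.
  field. lra.
Qed.


Lemma infinite_sum_ext (u v : nat -> R) L : (forall n, u n = v n) -> infinite_sum u L -> infinite_sum v L.
Proof.
  intros E H eps He. destruct (H eps He) as [N HN]. exists N. intros n Hn.
  rewrite <- (sum_eq u v n) by auto. auto.
Qed.

Lemma wnorm_moment nu (c : nat -> R -> R) t L : (forall k, (1 <= k)%nat -> 0 <= c k t) ->
  wnorm_is nu (fun k => c k t) L -> moment_is nu (fun k => c k t) L.
Proof.
  intros Hc H. unfold moment_is, wnorm_is in *. eapply infinite_sum_ext; [|exact H].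
  intros n. simpl. rewrite Rabs_pos_eq; auto. apply Hc; lia.
Qed.

Lemma mom_le_moment nu (c : nat -> R -> R) t L N : (forall k, (1 <= k)%nat -> 0 <= c k t) ->
  moment_is nu (fun k => c k t) L -> mom c nu N t <= L.
Proof.
  intros Hc H. unfold mom. apply partial_le_lim; auto. intros i.
  apply Rmult_le_pos; [left; apply w_pos|apply Hc; lia].
Qed.

Lemma moment_le nu (c : nat -> R -> R) t L B :
  moment_is nu (fun k => c k t) L -> (forall N, mom c nu N t <= B) -> L <= B.
Proof. intros H HB. apply (lim_le _ L B H). exact HB. Qed.

Lemma interp_mom (c : nat -> R -> R) t mu P th lam N : 0 < lam -> 0 <= th < 1 ->
  mu = th + (1 - th) * P -> (forall k, (1 <= k)%nat -> 0 <= c k t) ->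
  mom c mu N t <= th * lam * mom c 1 N t + (1 - th) * Rpower lam (- (th / (1 - th))) * mom c P N t.
Proof.
  intros Hl Ht Hm Hc. unfold mom.
  rewrite <- !fsum_scal, <- fsum_plus. apply fsum_le. intros m Hm'.
  rewrite w1 by lia. unfold w. rewrite Hm.
  pose proof (interp_pt (INR (S m)) lam th P (INR_S_pos m) Hl Ht).
  assert (0 <= c (S m) t) by (apply Hc; lia).
  apply Rmult_le_compat_r with (r := c (S m) t) in H; auto. nra.
Qed.

Lemma Rpower_2_2 : Rpower 2 2 = 4.
Proof. replace 2 with (1 + 1) at 2 by ring. rewrite Rpw_add, Rpower_1 by lra. ring. Qed.


Theorem mainTheorem8
  (a : nat -> nat -> R) (r s : nat -> R)
  (Astar alpha beta Rstar gamma : R) (sf : R -> R)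
  (hA : 0 < Astar) (halpha : 0 <= alpha) (hbeta : beta <= 1)
  (hab : alpha <= beta)
  (hsym : forall k l, (1 <= k)%nat -> (1 <= l)%nat -> a k l = a l k)
  (ha0 : forall k l, (1 <= k)%nat -> (1 <= l)%nat -> 0 <= a k l)
  (haub : forall k l, (1 <= k)%nat -> (1 <= l)%nat ->
     a k l <= Astar * (Rpower (INR k) alpha * Rpower (INR l) beta
                       + Rpower (INR k) beta * Rpower (INR l) alpha))
  (hR : 0 < Rstar) (hgamma : Rmax 0 (alpha + beta - 1) < gamma)
  (hr : forall k, (1 <= k)%nat -> Rstar * Rpower (INR k) gamma <= r k)
  (hs0 : forall k, (1 <= k)%nat -> 0 <= s k)
  (hsf : forall m, 0 <= m -> 0 < sf m /\
     exists L, moment_is m s L /\ L <= sf m)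
  (c : nat -> R -> R) (cin : nat -> R)
  (hcin : in_l1 1 cin)
  (hsol : global_solution a s r c cin)
  (mu : R) (hmu : Rmax (2 - alpha - beta) 1 < mu) :
  let rho := gamma / (mu - 1) in
  let p := (mu + gamma - 1) / (1 + gamma - alpha - beta) in
  let q := p / (p - 1) in
  let Ah := Astar / Rstar in
  let s1h := sf 1 / Rstar in
  let smuh := sf mu / Rstar in
  exists T, 0 < T /\ forall t, T <= t ->
    exists m, moment_is mu (fun k => c k t) m /\
      m <= 2 * Rpower
             (Rpower 2 (2 + rho) * Rpower (Rpower 2 mu * mu) p * Rpower q (1 - p) / p
                * Rpower Ah p * Rpower s1h (1 + p + rho)
              + Rpower 2 (2 + rho) * smuh * Rpower s1h rho)
             (1 / (1 + rho)) /\
      m <= 4 * (Rpower (Rpower 2 mu * mu) p * Rpower q (1 - p) / p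
                * Rpower Ah p * Rpower s1h (1 + p) + smuh).
Proof.
  intros rho p q Ah s1h smuh.
  assert (Hg0 : 0 < gamma) by (pose proof (Rmax_l 0 (alpha + beta - 1)); lra).
  assert (Hg1 : alpha + beta - 1 < gamma) by (pose proof (Rmax_r 0 (alpha + beta - 1)); lra).
  assert (Hm1 : 1 < mu) by (pose proof (Rmax_r (2 - alpha - beta) 1); lra).
  assert (Hm2 : 2 - alpha - beta < mu) by (pose proof (Rmax_l (2 - alpha - beta) 1); lra).
  assert (Hden : 0 < 1 + gamma - alpha - beta) by lra.
  assert (Hp : 1 < p).
  { unfold p. apply (Rmult_lt_reg_r (1 + gamma - alpha - beta)); auto.
    unfold Rdiv. rewrite Rmult_assoc, Rinv_l by lra. lra. }
  assert (He : mu - 2 + alpha + beta = (mu + gamma - 1) * (1 - / p)).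
  { unfold p. field. split; lra. }
  assert (Hq : 0 < q) by (unfold q; pos).
  assert (Hrho : 0 < rho) by (unfold rho; pos).
  destruct (hsf 1 ltac:(lra)) as [Hsf1 [L1 [HL1 HL1b]]].
  destruct (hsf mu ltac:(lra)) as [Hsfm [Lm [HLm HLmb]]].
  destruct hsol as [Hc0 [_ [Hder [[Mb HMb] [HC1 _]]]]].
  set (sig := s1h).
  assert (Hsig : 0 < sig) by (unfold sig, s1h; pos).
  set (sig' := Rpower 2 (1 / (1 + p)) * sig).
  assert (H2p : 1 < Rpower 2 (1 / (1 + p))).
  { pose proof (Rpower_lt 2 0 (1 / (1 + p)) ltac:(lra) ltac:(pos)) as HH.
    rewrite Rpower_O in HH by lra. exact HH. }
  assert (Hsig' : sig < sig') by (unfold sig'; nra).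
  set (D := Rpower 2 (mu - 1) * mu).
  assert (HD : 0 < D) by (unfold D; pos).
  set (z := q * Rstar / (2 * Astar * D * sig')).
  assert (Hz : 0 < z) by (unfold z; pos).
  set (X := Rpower (Rpower 2 mu * mu) p * Rpower q (1 - p) / p * Rpower Ah p * Rpower s1h (1 + p)).
  assert (HX : 0 < X) by (unfold X; pos).
  assert (HK2 : Astar * D * (Rpower z (1 - p) / p) * (sig' * sig') = Rstar * X).
  { unfold X, z, sig', sig, D, Ah, s1h. apply Kconst; auto. lra. }
  assert (HK1 : Astar * D * (z * (1 - / p)) = Rstar / (2 * sig')).
  { unfold z, q. field. repeat split; lra. }
  set (dl1 := Rstar * (sig' - sig)).
  assert (Hdl1 : 0 < dl1) by (unfold dl1; nra).
  set (B1 := Rmax 0 Mb).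
  set (T1 := 1 + B1 / dl1).
  assert (HB1 : 0 <= B1) by apply Rmax_l.
  assert (HT1 : 1 <= T1) by (unfold T1; assert (0 <= B1 / dl1) by (unfold Rdiv; apply Rmult_le_pos; [lra| left; pos]); lra).
  assert (Hc0' : forall t, 0 <= t -> forall k, (1 <= k)%nat -> 0 <= c k t) by (intros; apply Hc0; auto).
  assert (S1 : forall N t, T1 <= t -> mom c 1 N t <= sig').
  { intros N. destruct (mom_df a s r c 1 N Hder hsym ha0 Hc0) as [df Hdf].
    apply (barrier (mom c 1 N) df 1 sig' dl1 B1); auto; try lra.
    - intros t Ht. apply Hdf; lra.
    - intros t Ht Hf. destruct (Hdf t ltac:(lra)) as [_ Hb].
      rewrite Q1_zero in Hb.
      pose proof (s_part s 1 L1 N hs0 HL1).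
      pose proof (r_part r c t 1 gamma Rstar N hr (Hc0' t ltac:(lra))).
      pose proof (mom_mono c t 1 (1 + gamma) N ltac:(lra) (Hc0' t ltac:(lra))).
      assert (sf 1 = Rstar * sig) by (unfold sig, s1h; field; lra).
      unfold dl1. nra.
    - destruct (HMb 1 ltac:(lra)) as [L [HL HLM]].
      apply wnorm_moment in HL; [|apply Hc0' ; lra].
      pose proof (mom_le_moment 1 c 1 L N (Hc0' 1 ltac:(lra)) HL).
      pose proof (Rmax_r 0 Mb). unfold B1. lra. }
  destruct (HC1 mu ltac:(lra)) as [dc [Hw _]].
  destruct (proj1 (Hw T1 ltac:(lra))) as [L2 HL2].
  apply wnorm_moment in HL2; [|apply Hc0'; lra].
  set (B2 := Rmax 0 L2).
  assert (HB2 : 0 <= B2) by apply Rmax_l.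
  set (Y := X + smuh).
  assert (Hsmuh : 0 < smuh) by (unfold smuh; pos).
  assert (HY : 0 < Y) by (unfold Y; lra).
  set (dl2 := Rstar * Y).
  assert (Hdl2 : 0 < dl2) by (unfold dl2; pos).
  set (T := T1 + B2 / dl2).
  assert (HT : T1 <= T) by (unfold T; assert (0 <= B2 / dl2) by (unfold Rdiv; apply Rmult_le_pos; [lra| left; pos]); lra).
  assert (Hinit : forall N, mom c mu N T1 <= B2).
  { intros N. pose proof (mom_le_moment mu c T1 L2 N (Hc0' T1 ltac:(lra)) HL2).
    pose proof (Rmax_r 0 L2). unfold B2. lra. }
  assert (Kder : forall N, exists df : R -> R, forall t, T1 <= t ->
     derivable_pt_lim (mom c mu N) t (df t) /\ df t <= Rstar * Y - Rstar / 2 * mom c (mu + gamma) N t).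
  { intros N. destruct (mom_df a s r c mu N Hder hsym ha0 Hc0) as [df Hdf]. exists df.
    intros t Ht. destruct (Hdf t ltac:(lra)) as [Hd Hb]. split; auto.
    pose proof (Qmu_bound a c t mu gamma alpha beta Astar z p N ltac:(lra) halpha ltac:(lra) hA Hz Hp He
                  ha0 haub (Hc0' t ltac:(lra))) as HQ. fold D in HQ.
    rewrite HK1 in HQ.
    pose proof (s_part s mu Lm N hs0 HLm).
    pose proof (r_part r c t mu gamma Rstar N hr (Hc0' t ltac:(lra))).
    pose proof (S1 N t Ht) as Hm1t.
    pose proof (mom_nonneg c t 1 N (Hc0' t ltac:(lra))) as Hm1p.
    pose proof (mom_nonneg c t (mu + gamma) N (Hc0' t ltac:(lra))) as HMp.
    set (m1 := mom c 1 N t) in *. set (M' := mom c (mu + gamma) N t) in *.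
    assert (A1 : Rstar / (2 * sig') * (m1 * M') <= Rstar / 2 * M').
    { replace (Rstar / (2 * sig') * (m1 * M')) with (Rstar / 2 * M' * (m1 / sig')) by (field; lra).
      rewrite <- (Rmult_1_r (Rstar / 2 * M')) at 2. apply Rmult_le_compat_l. apply Rmult_le_pos; [left; pos| lra].
      unfold Rdiv. apply (Rmult_le_reg_r sig'); [lra|]. rewrite Rmult_assoc, Rinv_l by lra. lra. }
    assert (A2 : Astar * D * (Rpower z (1 - p) / p) * m1 ^ 2 <= Rstar * X).
    { rewrite <- HK2. apply Rmult_le_compat_l. left; pos. simpl. nra. }
    assert (sf mu = Rstar * smuh) by (unfold smuh; field; lra).
    unfold Y. lra. }
  assert (Hmono : forall N t, T1 <= t -> mom c mu N t <= mom c (mu + gamma) N t).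
  { intros; apply mom_mono; [lra|apply Hc0'; lra]. }
  assert (S2b : forall N t, T <= t -> mom c mu N t <= 4 * Y).
  { intros N. destruct (Kder N) as [df Hdf].
    apply (barrier (mom c mu N) df T1 (4 * Y) dl2 B2); auto; try lra.
    - intros t Ht; apply Hdf; auto.
    - intros t Ht Hf. destruct (Hdf t Ht) as [_ Hb]. pose proof (Hmono N t Ht). unfold dl2. nra. }
  set (Xb := Rpower (4 * Y * Rpower sig' rho) (1 / (1 + rho))).
  assert (HXb : 0 < Xb) by (unfold Xb; pos).
  set (th := gamma / (mu + gamma - 1)).
  assert (Hth : 0 <= th < 1).
  { unfold th. split. left; pos. apply (Rmult_lt_reg_r (mu + gamma - 1)); [lra|].
    unfold Rdiv. rewrite Rmult_assoc, Rinv_l by lra. lra. }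
  assert (Hthr : th / (1 - th) = rho) by (unfold th, rho; field; split; lra).
  assert (Hmuth : mu = th + (1 - th) * (mu + gamma)) by (unfold th; field; lra).
  set (lam := Xb / sig').
  assert (Hlam : 0 < lam) by (unfold lam; pos).
  assert (Hid : Xb * Rpower lam rho = 4 * Y).
  { apply ln_inv; [pos|pos|]. unfold lam, Xb. lnexp. field. lra. }
  assert (S2a : forall N t, T <= t -> mom c mu N t <= Xb).
  { intros N. destruct (Kder N) as [df Hdf].
    apply (barrier (mom c mu N) df T1 Xb dl2 B2); auto; try lra.
    - intros t Ht; apply Hdf; auto.
    - intros t Ht Hf. destruct (Hdf t Ht) as [_ Hb].
      pose proof (interp_mom c t mu (mu + gamma) th lam N Hlam Hth Hmuth (Hc0' t ltac:(lra))) as HI.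
      rewrite Hthr in HI.
      pose proof (S1 N t Ht) as Hm1t.
      pose proof (mom_nonneg c t 1 N (Hc0' t ltac:(lra))) as Hm1p.
      set (m1 := mom c 1 N t) in *. set (M' := mom c (mu + gamma) N t) in *.
      set (f := mom c mu N t) in *.
      assert (A1 : th * lam * m1 <= th * Xb).
      { unfold lam. replace (th * (Xb / sig') * m1) with (th * Xb * (m1 / sig')) by (field; lra).
        rewrite <- (Rmult_1_r (th * Xb)) at 2. apply Rmult_le_compat_l. nra.
        unfold Rdiv. apply (Rmult_le_reg_r sig'); [lra|]. rewrite Rmult_assoc, Rinv_l by lra. lra. }
      assert (A2 : Xb <= Rpower lam (- rho) * M').
      { assert ((1 - th) * Xb <= (1 - th) * (Rpower lam (- rho) * M')) by nra.
        apply Rmult_le_reg_l in H; lra. }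
      assert (A3 : 4 * Y <= M').
      { rewrite <- Hid. apply Rmult_le_compat_r with (r := Rpower lam rho) in A2; [|left; pos].
        replace (Rpower lam (- rho) * M' * Rpower lam rho) with (M' * (Rpower lam rho * Rpower lam (- rho))) in A2 by ring.
        rewrite <- Rpw_add in A2. replace (rho + - rho) with 0 in A2 by ring.
        rewrite Rpower_O in A2 by auto. lra. }
      assert (Rstar / 2 * (4 * Y) <= Rstar / 2 * M') by (apply Rmult_le_compat_l; [left; pos|lra]). unfold dl2. lra. }
  exists T. split; [lra|]. intros t Ht.
  destruct (proj1 (Hw t ltac:(lra))) as [m Hm].
  apply wnorm_moment in Hm; [|apply Hc0'; lra].
  exists m. split; [exact Hm|]. split.
  - apply Rle_trans with Xb. apply (moment_le mu c t m Xb Hm). intros N; apply S2a; auto.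
    set (I := Rpower 2 (2 + rho) * Rpower (Rpower 2 mu * mu) p * Rpower q (1 - p) / p * Rpower Ah p *
               Rpower sig (1 + p + rho) + Rpower 2 (2 + rho) * smuh * Rpower sig rho).
    assert (HI : I = Rpower 2 (2 + rho) * Rpower sig rho * Y).
    { unfold I, Y, X. rewrite (Rpw_add sig (1 + p) rho). unfold sig. field. lra. }
    assert (Hs'r : Rpower sig' rho <= Rpower 2 rho * Rpower sig rho).
    { unfold sig'. rewrite Rpower_mul by pos. rewrite Rpower_mult. apply Rmult_le_compat_r; [left; pos|].
      apply Rle_Rpower; [lra|]. rewrite <- (Rmult_1_l rho) at 2. apply Rmult_le_compat_r; [lra|].
      unfold Rdiv. rewrite Rmult_1_l. rewrite <- Rinv_1. apply Rinv_le_contravar; lra. }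
    assert (H4 : Rpower 2 (2 + rho) = 4 * Rpower 2 rho) by (rewrite Rpw_add, Rpower_2_2; auto).
    assert (HIb : 4 * Y * Rpower sig' rho <= I).
    { rewrite HI, H4. assert (0 < 4 * Y) by lra. nra. }
    assert (Xb <= Rpower I (1 / (1 + rho))).
    { unfold Xb. apply Rle_Rpower_l. left; pos. split; [pos|auto]. }
    assert (0 < Rpower I (1 / (1 + rho))) by pos. lra.
  - apply (moment_le mu c t m (4 * Y) Hm). intros N; apply S2b; auto.
Qed.
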